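(* Let $d \ge 2$, let $k \ge 0$, and let $A^{(1)},\dots,A^{(k)}$ be arbitrary parameter matrices of the appropriate sizes. Let $P \in \{0,1\}^{d\times d}$ be any permutation matrix other than the identity. Then there exists a matrix $Y \in \mathbb{R}^{d \times d}$ such that, when the $k$-layer decoder-only (causally masked), attention-only disentangled transformer with parameters $A^{(1)},\dots,A^{(k)}$ is run on the input $X = [P; Y_P]$ with $Y_P = PY$, the matrix $Y$ does not occur as a block of the final residual stream $h^{(k)}$, i.e. $Y$ is not equal to any submatrix of $h^{(k)}$ formed by $d$ consecutive rows and $d$ consecutive columns.
   Context: A permutation matrix $P \in \{0,1\}^{d\times d}$ has $i$-th row equal to the standard basis vector $e_{\pi(i)}$ for a permutation $\pi$ of $\{1,\dots,d\}$. For a matrix $Y \in \mathbb{R}^{d\times d}$ write $Y_P = PY$; the task of inverse permutation learning is to output $Y = P^{-1}Y_P = P^\top Y_P$. The input is $X = [P; Y_P] \in \mathbb{R}^{T \times d}$ (vertical stacking), $T = 2d$, and the initial residual stream is $h^{(0)} = [X, I_T] \in \mathbb{R}^{T \times (d+T)}$ (token embedding $X$ concatenated horizontally with one-hot position embeddings). Softmax $\mathcal{S}$ is applied row-wise, $\mathcal{S}(v)_i = \exp(v_i)/\sum_j\exp(v_j)$; $\mathrm{MASK}(V)_{ij} = V_{ij}$ if $i \ge j$ and $-\infty$ otherwise. The causally masked attention layer is $\mathrm{attn}(h;A) = \mathcal{S}(\mathrm{MASK}(hAh^\top))\,h$. The disentangled transformer computes $h^{(\ell+1)} = [\,h^{(\ell)},\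 \mathrm{attn}(h^{(\ell)};A^{(\ell+1)})\,]$ (horizontal concatenation) for $\ell = 0,\dots,k-1$, with $A^{(\ell+1)}$ square of size equal to the number of columns of $h^{(\ell)}$. The matrix $h^{(\ell)}$ is the residual stream at layer $\ell$; every $h^{(\ell)}$ is a submatrix of $h^{(k)}$. *)

(* Defs.v *)
(* concrete real numbers R, matrices as functions nat -> nat -> R
   whose entries are only meaningful inside the stated dimensions
   (entries outside are set to 0). *)
From Stdlib Require Import Reals Arith Lia.
Open Scope R_scope.

Fixpoint sumR (n : nat) (f : nat -> R) : R :=
  match n with
  | O => 0
  | S m => sumR m f + f m
  end.

Definition mat := nat -> nat -> R.

Definition perm_mx (pi : nat -> nat) : mat :=
  fun i j => if Nat.eqb j (pi i) then 1 else 0.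

Definition mulmx (d : nat) (M N : mat) : mat :=
  fun i j => sumR d (fun l => M i l * N l j).

Definition ntok (d : nat) : nat := 2 * d.

(* width (number of columns) of h^(l): d + T = 3d, doubled at each layer *)
Definition width (d l : nat) : nat := 2 ^ l * (3 * d).

(* h^(0) = [X, I_T] with X = [P; Y_P], Y_P = P Y *)
Definition h0 (d : nat) (P Y : mat) : mat :=
  fun i c =>
    if Nat.ltb i (ntok d) then
      if Nat.ltb c d then
        (if Nat.ltb i d then P i c else mulmx d P Y (i - d)%nat c)
      else if Nat.ltb c (d + ntok d) then
        (if Nat.eqb (c - d)%nat i then 1 else 0)
      else 0
    else 0.

(* causally masked attention S(MASK(h A h^T)) h, for h with T rows, w columns.
   Masked entries (j > i) get weight exp(-oo) = 0, so row i is a softmax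
   over j = 0..i. *)
Definition score (w : nat) (h : mat) (A : mat) (i j : nat) : R :=
  sumR w (fun a => sumR w (fun b => h i a * A a b * h j b)).

Definition attn (w : nat) (h : mat) (A : mat) : mat :=
  fun i c =>
    let Z := sumR (S i) (fun j => exp (score w h A i j)) in
    sumR (S i) (fun j => exp (score w h A i j) / Z * h j c).

Definition layer (d l : nat) (h : mat) (A : mat) : mat :=
  fun i c =>
    if Nat.ltb i (ntok d) then
      if Nat.ltb c (width d l) then h i c
      else if Nat.ltb c (2 * width d l) then attn (width d l) h A i (c - width d l)%nat
      else 0
    else 0.

(* residual stream h^(k); As l is the parameter matrix A^(l+1)
   (a (width d l) x (width d l) matrix) *)
Fixpoint resid (d : nat) (As : nat -> mat) (P Y : mat) (k : nat) : mat :=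
  match k with
  | O => h0 d P Y
  | S l => layer d l (resid d As P Y l) (As l)
  end.

(* Main.v *)
Require Import Defs.
From Stdlib Require Import Reals Arith Lia Lra.
Open Scope R_scope.

Lemma sumR_ext n f g : (forall j, (j < n)%nat -> f j = g j) -> sumR n f = sumR n g.
Proof.
  induction n; intros H; simpl; auto.
  rewrite IHn by (intros; apply H; lia). rewrite H by lia. auto.
Qed.

Lemma sumR_scale n a g : sumR n (fun j => a * g j) = a * sumR n g.
Proof. induction n; simpl; [ring|rewrite IHn; ring]. Qed.

Lemma sumR_pos n e : (forall j, 0 < e j) -> 0 < sumR (S n) e.
Proof.
  intros H; induction n; simpl. specialize (H 0%nat); lra.
  simpl in IHn. specialize (H (S n)). lra.
Qed.

Lemma sumR_strict n e x M : (forall j, 0 < e j) -> (forall j, (j <= n)%nat -> x j <= M) ->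
  x 0%nat < M -> sumR (S n) (fun j => e j * x j) < M * sumR (S n) e.
Proof.
  intros He Hx H0; induction n; simpl.
  - specialize (He 0%nat). nra.
  - simpl in IHn. assert (IH := IHn ltac:(intros; apply Hx; lia)).
    specialize (He (S n)). specialize (Hx (S n) ltac:(lia)). nra.
Qed.

Lemma convex_lt n e x M : (forall j, 0 < e j) -> (forall j, (j <= n)%nat -> x j <= M) ->
  x 0%nat < M -> sumR (S n) (fun j => e j / sumR (S n) e * x j) < M.
Proof.
  intros He Hx H0.
  assert (HZ := sumR_pos n e He).
  rewrite (sumR_ext _ _ (fun j => / sumR (S n) e * (e j * x j))).
  2:{ intros; unfold Rdiv; ring. }
  rewrite sumR_scale.
  assert (Hs := sumR_strict n e x M He Hx H0).
  apply (Rmult_lt_reg_l (sumR (S n) e)); auto.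
  rewrite <- Rmult_assoc, Rinv_r by lra. lra.
Qed.

Lemma sum_delta n p g : sumR n (fun l => (if Nat.eqb l p then 1 else 0) * g l) =
  if Nat.ltb p n then g p else 0.
Proof.
  induction n; simpl. destruct (Nat.ltb_spec p 0); [lia|auto].
  rewrite IHn. destruct (Nat.eqb_spec n p); destruct (Nat.ltb_spec p n);
   destruct (Nat.ltb_spec p (S n)); try lia; subst; ring.
Qed.

Lemma inherit d As P Y l i c : (c < 3 * d)%nat -> resid d As P Y l i c = h0 d P Y i c.
Proof.
  intros Hc; induction l; simpl; auto.
  unfold layer. destruct (Nat.ltb_spec i (ntok d)).
  - assert (3 * d <= width d l)%nat.
    { unfold width. assert (1 <= 2 ^ l)%nat by (apply Nat.neq_0_lt_0; apply Nat.pow_nonzero; lia). nia. }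
    destruct (Nat.ltb_spec c (width d l)); [auto|lia].
  - unfold h0. destruct (Nat.ltb_spec i (ntok d)); [lia|auto].
Qed.

Section S.
Variables (d : nat) (As : nat -> mat) (pi : nat -> nat).
Hypothesis Hd : (2 <= d)%nat.
Hypothesis Hpi : forall i, (i < d)%nat -> (pi i < d)%nat.

Definition Yc : mat := fun i j => INR (2 + i + j).
Definition MM := INR (2 * d).

Lemma MM_big : 4 <= MM.
Proof. unfold MM. replace 4 with (INR 4) by (simpl; lra). apply le_INR; lia. Qed.

Lemma mul_eval i c : (i < d)%nat -> mulmx d (perm_mx pi) Yc i c = Yc (pi i) c.
Proof.
  intros Hi. unfold mulmx, perm_mx.
  rewrite sum_delta. specialize (Hpi i Hi). destruct (Nat.ltb_spec (pi i) d); [auto|lia].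
Qed.

Lemma h0_props i c :
  h0 d (perm_mx pi) Yc i c <= MM /\
  (i = 0%nat -> h0 d (perm_mx pi) Yc i c <= 1) /\
  (h0 d (perm_mx pi) Yc i c = MM -> (c < 3 * d)%nat).
Proof.
  assert (HM := MM_big).
  unfold h0. destruct (Nat.ltb_spec i (ntok d)); [|repeat split; intros; lra].
  destruct (Nat.ltb_spec c d).
  - destruct (Nat.ltb_spec i d).
    + unfold perm_mx. destruct (Nat.eqb (c) (pi i)); repeat split; intros; try lra; lia.
    + unfold ntok in *. rewrite mul_eval by lia. unfold Yc.
      assert (pi (i - d) < d)%nat by (apply Hpi; lia).
      repeat split; intros; try lia.
      * unfold MM; apply le_INR; lia.
  - destruct (Nat.ltb_spec c (d + ntok d)).
    + unfold ntok in *. destruct (Nat.eqb (c - d) i); repeat split; intros; try lra; lia.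
    + repeat split; intros; lra.
Qed.

Lemma resid_props l i c :
  resid d As (perm_mx pi) Yc l i c <= MM /\
  (i = 0%nat -> resid d As (perm_mx pi) Yc l i c <= 1) /\
  (resid d As (perm_mx pi) Yc l i c = MM -> (c < 3 * d)%nat).
Proof.
  assert (HM := MM_big).
  revert i c; induction l; intros i c; simpl.
  - apply h0_props.
  - unfold layer. destruct (Nat.ltb_spec i (ntok d)); [|repeat split; intros; lra].
    destruct (Nat.ltb_spec c (width d l)); [apply IHl|].
    destruct (Nat.ltb_spec c (2 * width d l)); [|repeat split; intros; lra].
    set (h := resid d As (perm_mx pi) Yc l).
    set (c' := (c - width d l)%nat).
    assert (Hlt : attn (width d l) h (As l) i c' < MM).
    { unfold attn.
      apply (convex_lt i (fun j => exp (score (width d l) h (As l) i j)) (fun j => h j c')).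
      - intros; apply exp_pos.
      - intros; apply IHl.
      - destruct (IHl 0%nat c') as [_ [Hr0 _]]. specialize (Hr0 eq_refl). fold h in Hr0. lra. }
    repeat split; intros; try lra.
    subst i. unfold attn. simpl. destruct (IHl 0%nat c') as [_ [Hr0 _]]. specialize (Hr0 eq_refl). fold h in Hr0.
    assert (0 < exp (score (width d l) h (As l) 0 0)) by apply exp_pos.
    replace (0 + exp (score (width d l) h (As l) 0 0) / (0 + exp (score (width d l) h (As l) 0 0)) * h 0%nat c') with (h 0%nat c') by (field; lra).
    auto.
Qed.
End S.

Theorem theorem1 (d k : nat) (As : nat -> mat) (pi : nat -> nat) :
  (2 <= d)%nat ->
  (forall i, (i < d)%nat -> (pi i < d)%nat) ->
  (forall i j, (i < d)%nat -> (j < d)%nat -> pi i = pi j -> i = j) ->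
  (exists i, (i < d)%nat /\ pi i <> i) ->
  exists Y : mat,
    forall r c : nat,
      (r + d <= ntok d)%nat -> (c + d <= width d k)%nat ->
      ~ (forall i j, (i < d)%nat -> (j < d)%nat ->
           resid d As (perm_mx pi) Y k (r + i)%nat (c + j)%nat = Y i j).
Proof.
  intros Hd Hpi _ [i0 [Hi0 Hne]].
  exists Yc. intros r c Hr Hc H.
  assert (HM := MM_big d Hd).
  unfold ntok in Hr.
  assert (H1 := H (d-1)%nat (d-1)%nat ltac:(lia) ltac:(lia)).
  assert (E : Yc (d-1)%nat (d-1)%nat = MM d) by (unfold Yc, MM; f_equal; lia).
  rewrite E in H1.
  destruct (resid_props d As pi Hd Hpi k (r + (d-1))%nat (c + (d-1))%nat) as [_ [_ H3]].
  specialize (H3 H1).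
  rewrite inherit in H1 by auto.
  unfold h0 in H1.
  destruct (Nat.ltb_spec (r + (d-1)) (ntok d)); [|unfold ntok in *; lia].
  destruct (Nat.ltb_spec (c + (d-1)) d).
  2:{ destruct (Nat.ltb_spec (c + (d-1)) (d + ntok d)); [|lra].
      destruct (Nat.eqb _ _); lra. }
  assert (c = 0%nat) by lia. subst c.
  assert (Hq := H 0%nat 0%nat ltac:(lia) ltac:(lia)).
  rewrite inherit in Hq by lia. unfold h0 in Hq.
  destruct (Nat.ltb_spec (r + 0) (ntok d)); [|unfold ntok in *; lia].
  destruct (Nat.ltb_spec (0 + 0) d); [|lia].
  destruct (Nat.ltb_spec (r + 0) d).
  { unfold perm_mx, Yc in Hq. destruct (Nat.eqb _ _); simpl in Hq; lra. }
  assert (r = d) by lia. subst r.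
  assert (Hw := H i0 0%nat Hi0 ltac:(lia)).
  rewrite inherit in Hw by lia. unfold h0 in Hw.
  destruct (Nat.ltb_spec (d + i0) (ntok d)); [|unfold ntok in *; lia].
  destruct (Nat.ltb_spec (0 + 0) d); [|lia].
  destruct (Nat.ltb_spec (d + i0) d); [lia|].
  replace (d + i0 - d)%nat with i0 in Hw by lia.
  rewrite mul_eval in Hw by auto. unfold Yc in Hw.
  apply INR_eq in Hw. lia.
Qed.
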